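(* Let $G$ be a $k$-uniform hypergraph with vertex set $\{1,\dots,n\}$ and edges $e_1,\dots,e_\ell$ (each a $k$-subset of $\{1,\dots,n\}$). Then $G$ is not $2$-DP-colorable if and only if there exist $(n-k)$-faces $a^1,\dots,a^\ell$ of $Q_2^n$ such that, for each $j$, the set of non-asterisk positions of $a^j$ is $e_j$, and $\bigcup_{j=1}^{\ell}(a^j\cup\overline{a^j})=Q_2^n$, where $\overline{a^j}$ denotes the face antipodal to $a^j$.
   Context: $Q_2^n=\{0,1\}^n$. An $m$-face of $Q_2^n$ is given by a tuple $a=(a_1,\dots,a_n)\in\{0,1,*\}^n$ with exactly $m$ entries equal to $*$; it denotes the set $\{x\in Q_2^n : x_i=a_i \text{ whenever } a_i\in\{0,1\}\}$. The face antipodal to $a$ is $\overline{a}$ with $\overline{a}_i=*$ where $a_i=*$ and $\overline{a}_i=1-a_i$ otherwise. For a hypergraph $G$, a collection $\Phi=(\varphi_e)_{e\in E(G)}$ consists of maps $\varphi_e:e\to\{0,1\}$; a $2$-coloring $f:V(G)\to\{0,1\}$ avoids $\Phi$ if for every edge $e$, $f|_e\neq\varphi_e$ and $f|_e\neq\varphi_e\oplus 1$ (the complementary map). $G$ is $2$-DP-colorable if for every such collection $\Phi$ there is a $2$-coloring avoiding $\Phi$. *)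

(* Defs.v *)
From mathcomp Require Import all_boot.
Set Implicit Arguments. Unset Strict Implicit. Unset Printing Implicit Defensive.

(* Q_2^n = {0,1}^n, represented as {ffun 'I_n -> bool} (false = 0, true = 1). *)
Definition cube (n : nat) := {ffun 'I_n -> bool}.

(* A face of Q_2^n: a tuple in {0,1,*}^n; None stands for *. *)
Definition face (n : nat) := {ffun 'I_n -> option bool}.

Definition dim_face n (a : face n) : nat := #|[set i | a i == None]|.

Definition fixed_pos n (a : face n) : {set 'I_n} := [set i | a i != None].

Definition face_pts n (a : face n) : {set cube n} :=
  [set x : cube n | [forall i, if a i is Some b then x i == b else true]].

Definition antipodal n (a : face n) : face n :=
  [ffun i => omap negb (a i)].

Definition k_uniform n l (E : 'I_l -> {set 'I_n}) (k : nat) : Prop :=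
  forall j, #|E j| = k.

(* A collection Phi: for each edge e, a map phi_e : e -> {0,1}, represented
   by a function 'I_n -> bool of which only the values on e matter. *)
Definition avoids n l (E : 'I_l -> {set 'I_n}) (Phi : 'I_l -> 'I_n -> bool)
  (f : 'I_n -> bool) : Prop :=
  forall j, ~ (forall v, v \in E j -> f v = Phi j v) /\
            ~ (forall v, v \in E j -> f v = ~~ Phi j v).

Definition DP2_colorable n l (E : 'I_l -> {set 'I_n}) : Prop :=
  forall Phi : 'I_l -> 'I_n -> bool, exists f : 'I_n -> bool, avoids E Phi f.

(* Main.v *)
Require Import Defs.
From mathcomp Require Import all_boot.
From Stdlib Require Import Classical.

Theorem proposition7 (n k l : nat) (E : 'I_l -> {set 'I_n}) :
  injective E -> k_uniform E k ->
  (~ DP2_colorable E <->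
   exists a : 'I_l -> face n,
     (forall j, dim_face (a j) = n - k) /\
     (forall j, fixed_pos (a j) = E j) /\
     \bigcup_(j < l) (face_pts (a j) :|: face_pts (antipodal (a j))) = [set: cube n]).
Proof.
move=> _ Hk; split.
- move=> HnD.
  have [Phi HPhi] : exists Phi : 'I_l -> 'I_n -> bool,
      forall f, ~ avoids E Phi f.
    apply: NNPP => H; apply: HnD => Phi.
    apply: NNPP => H2; apply: H; exists Phi => f Hf; apply: H2; by exists f.
  exists (fun j => [ffun i => if i \in E j then Some (Phi j i) else None]).
  split; [|split].
  + move=> j; rewrite /dim_face.
    have -> : [set i | [ffun i => if i \in E j then Some (Phi j i) else None] i == None] = ~: E j.
      by apply/setP => i; rewrite !inE ffunE; case: (i \in E j).
    by rewrite cardsCs setCK card_ord Hk.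
  + move=> j; apply/setP => i; rewrite !inE ffunE; by case: (i \in E j).
  + apply/setP => x; rewrite inE; apply/bigcupP.
    have := HPhi x; rewrite /avoids => Hna.
    apply: NNPP => Hno; apply: Hna => j; split => Hall; apply: Hno; exists j => //;
      rewrite !inE; apply/orP; [left|right]; apply/forallP => i;
      rewrite ?ffunE; case: (boolP (i \in E j)) => Hi //=; rewrite Hall //.
- case=> a [Hd [Hf Hu]] HD.
  have [f Hav] := HD (fun j v => a j v == Some true).
  have : finfun f \in \bigcup_(j < l) (face_pts (a j) :|: face_pts (antipodal (a j))).
    by rewrite Hu inE.
  case/bigcupP => j _; rewrite !inE => /orP [] /forallP Hx; have [H1 H2] := Hav j.
  + apply: H1 => v; rewrite -Hf inE => Hv; have := Hx v; rewrite ffunE.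
    by case: (a j v) Hv => // [[]] _ /eqP ->.
  + apply: H2 => v; rewrite -Hf inE => Hv; have := Hx v; rewrite !ffunE.
    by case: (a j v) Hv => // [[]] _ /eqP ->.
Qed.
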